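(* Let $t_n=n(n+1)/2$. There exists a rational parametric solution of the system \[ t_{x}+t_{y}=t_{p},\quad t_{y}+t_{z}=t_{q},\quad t_{z}+t_{x}=t_{r} \] depending on three parameters; that is, there exist rational functions $x,y,z,p,q,r\in\mathbb{Q}(u,v,w)$ in three independent indeterminates $u,v,w$ which satisfy the system identically in $\mathbb{Q}(u,v,w)$ and such that the field $\mathbb{Q}(x,y,z,p,q,r)$ has transcendence degree $3$ over $\mathbb{Q}$.
   Context: Here $t_n=n(n+1)/2$ is extended to arguments in any field of characteristic $0$ by the same formula. *)

(* Defs.v *)
From HB Require Import structures.
From mathcomp Require Import all_boot all_order all_algebra.
From mathcomp Require Import fraction.
From mathcomp Require Import mpoly.
Set Implicit Arguments. Unset Strict Implicit. Unset Printing Implicit Defensive.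
Import Order.TTheory GRing.Theory Num.Theory.
Local Open Scope ring_scope.

Definition tri (K : fieldType) (a : K) : K := a * (a + 1) / 2%:R.

Definition QUVW : fieldType := {fraction {mpoly rat[3]}}.

Definition indet (i : 'I_3) : QUVW := tofrac ('X_i : {mpoly rat[3]}).

Definition qeval (K : fieldType) (n : nat) (P : {mpoly rat[n]}) (s : 'I_n -> K) : K :=
  mmap (ratr : rat -> K) s P.

Definition alg_indep (K : fieldType) (n : nat) (s : 'I_n -> K) : Prop :=
  forall P : {mpoly rat[n]}, qeval P s = 0 -> P = 0.

Definition in_gen_field (K : fieldType) (m : nat) (g : 'I_m -> K) (a : K) : Prop :=
  exists P Q : {mpoly rat[m]}, qeval Q g != 0 /\ a = qeval P g / qeval Q g.

Definition trdeg_gen_eq (K : fieldType) (m : nat) (g : 'I_m -> K) (d : nat) : Prop :=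
  (exists s : 'I_d -> K, (forall i, in_gen_field g (s i)) /\ alg_indep s) /\
  (forall s : 'I_d.+1 -> K, (forall i, in_gen_field g (s i)) -> ~ alg_indep s).

(* Main.v *)
Require Import Defs.
From HB Require Import structures.
From mathcomp Require Import all_boot all_order all_algebra.
From mathcomp Require Import fraction.
From mathcomp Require Import mpoly.
From mathcomp Require Import generic_quotient ring zify.
Import GRing.Theory.
Local Open Scope ring_scope.
Set Implicit Arguments. Unset Strict Implicit.

Lemma tri_rel (K : fieldType) (X Y P a : K) : (2%:R : K) != 0 -> a != 0 ->
  Y = ((1/a - a)/2%:R) * X + (1/a + a)/2%:R -> P = Y + a * (X - 1) ->
  tri ((X-1)/2%:R) + tri ((Y-1)/2%:R) = tri ((P-1)/2%:R).
Proof.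
move=> h2 ha -> ->; rewrite /tri. field. by rewrite h2 ha.
Qed.

Definition i0 : 'I_3 := ord0.
Definition i1 : 'I_3 := @Ordinal 3 1 isT.
Definition i2 : 'I_3 := @Ordinal 3 2 isT.
Definition u : QUVW := indet i0.
Definition v : QUVW := indet i1.
Definition w : QUVW := indet i2.

Definition pt (i : 'I_3) : rat := nth 0 [:: 2%:R; 3%:R; 5%:R] i.

Lemma nzE (E : forall R : comNzRingType, R -> R -> R -> R)
  (Em : forall (R S : comNzRingType) (f : {rmorphism R -> S}) a b c,
          f (E R a b c) = E S (f a) (f b) (f c)) :
  E _ (2%:R : rat) 3%:R 5%:R != 0 -> E _ u v w != 0.
Proof.
move=> h; rewrite /u /v /w /indet -Em.
rewrite tofrac_eq0; apply: contra h => /eqP h.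
have := congr1 (meval pt) h; rewrite meval0 Em /= !mevalXU /pt /= => ->.
by [].
Qed.

Definition DnE (R : comNzRingType) (a b c : R) : R :=
  8%:R * a * b * c - (1 - a^+2) * (1 - b^+2) * (1 - c^+2).
Definition NnE (R : comNzRingType) (a b c : R) : R :=
  (1 - c^+2) * (1 - b^+2) * (1 + a^+2) + 2%:R * a * (1 - c^+2) * (1 + b^+2)
  + 4%:R * a * b * (1 + c^+2).
Definition XmE (R : comNzRingType) (a b c : R) : R := NnE a b c - DnE a b c.
Definition YpE (R : comNzRingType) (a b c : R) : R :=
  (1 - a^+2) * NnE a b c + (1 + a^+2) * DnE a b c.
Definition YmE (R : comNzRingType) (a b c : R) : R :=
  (1 - a^+2) * NnE a b c + (1 - a)^+2 * DnE a b c.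
Definition ZmE (R : comNzRingType) (a b c : R) : R :=
  (1 - b^+2) * YpE a b c + 2%:R * a * (1 - b)^+2 * DnE a b c.
Definition IdE (R : comNzRingType) (a b c : R) : R := a.
Definition IdE1 (R : comNzRingType) (a b c : R) : R := b.
Definition IdE2 (R : comNzRingType) (a b c : R) : R := c.
Definition TwoE (R : comNzRingType) (a b c : R) : R := 2%:R.

Ltac morphE := move=> R S f a b c; rewrite /DnE /NnE /XmE /YpE /YmE /ZmE /IdE /IdE1 /IdE2 /TwoE
   ?(rmorphB, rmorphD, rmorphM, rmorph1, rmorphXn, rmorph_nat).

Lemma Dn_nz : DnE u v w != 0. Proof. by apply: nzE; [morphE | ]. Qed.
Lemma Xm_nz : XmE u v w != 0. Proof. by apply: nzE; [morphE | ]. Qed.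
Lemma Ym_nz : YmE u v w != 0. Proof. by apply: nzE; [morphE | ]. Qed.
Lemma Zm_nz : ZmE u v w != 0. Proof. by apply: nzE; [morphE | ]. Qed.
Lemma u_nz : u != 0. Proof. exact: (@nzE IdE). Qed.
Lemma v_nz : v != 0. Proof. exact: (@nzE IdE1). Qed.
Lemma w_nz : w != 0. Proof. exact: (@nzE IdE2). Qed.
Lemma two_nz : (2%:R : QUVW) != 0. Proof. by apply: (@nzE TwoE); [morphE | ]. Qed.


Section Gen.
Variables (K : fieldType) (a b c : K).
Hypotheses (h2 : 2%:R != 0 :> K) (ha : a != 0) (hb : b != 0) (hc : c != 0)
  (hD : DnE a b c != 0) (hXm : XmE a b c != 0) (hYm : YmE a b c != 0)
  (hZm : ZmE a b c != 0).

Definition gX := NnE a b c / DnE a b c.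
Definition gY := (1/a - a)/2%:R * gX + (1/a + a)/2%:R.
Definition gZ := (1/b - b)/2%:R * gY + (1/b + b)/2%:R.
Definition gP := gY + a * (gX - 1).
Definition gQ := gZ + b * (gY - 1).
Definition gR := gX + c * (gZ - 1).

Lemma gX_fix : gX = (1/c - c)/2%:R * gZ + (1/c + c)/2%:R.
Proof.
move: hD; rewrite /gZ /gY /gX /NnE /DnE => hD'.
field. by rewrite h2 ha hb hc hD'.
Qed.

Lemma gXm : gX - 1 != 0.
Proof.
have -> : gX - 1 = XmE a b c / DnE a b c.
  move: hD; rewrite /gX /XmE /NnE /DnE => hD'. field. by rewrite hD'.
by rewrite mulf_neq0 ?invr_neq0.
Qed.

Lemma gYm : gY - 1 != 0.
Proof.
have -> : gY - 1 = YmE a b c / (2%:R * a * DnE a b c).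
  move: hD; rewrite /gY /gX /YmE /NnE /DnE => hD'. field. by rewrite hD' h2 ha.
by rewrite mulf_neq0 ?invr_neq0 ?mulf_neq0.
Qed.

Lemma gZm : gZ - 1 != 0.
Proof.
have -> : gZ - 1 = ZmE a b c / (4%:R * a * b * DnE a b c).
  move: hD; rewrite /gZ /gY /gX /ZmE /YpE /NnE /DnE => hD'. field.
  have h4 : 4%:R != 0 :> K by rewrite (_ : 4%:R = 2%:R * 2%:R) ?mulf_neq0 // -natrM.
  by rewrite hD' h4 ha hb.
have h4 : 4%:R != 0 :> K by rewrite (_ : 4%:R = 2%:R * 2%:R) ?mulf_neq0 // -natrM.
by rewrite mulf_neq0 ?invr_neq0 ?mulf_neq0.
Qed.

Lemma gtri1 : tri ((gX-1)/2%:R) + tri ((gY-1)/2%:R) = tri ((gP-1)/2%:R).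
Proof. by apply: tri_rel => //; rewrite /gP /gQ /gR /gY /gZ. Qed.
Lemma gtri2 : tri ((gY-1)/2%:R) + tri ((gZ-1)/2%:R) = tri ((gQ-1)/2%:R).
Proof. by apply: tri_rel => //; rewrite /gP /gQ /gR /gY /gZ. Qed.
Lemma gtri3 : tri ((gZ-1)/2%:R) + tri ((gX-1)/2%:R) = tri ((gR-1)/2%:R).
Proof. apply: (tri_rel (X := gZ) (Y := gX) (P := gR) h2 hc); first exact: gX_fix. by rewrite /gR. Qed.

Lemma grec1 : a = ((gP-1)/2%:R - (gY-1)/2%:R) / ((gX-1)/2%:R).
Proof. have := gXm; rewrite /gP => h. field. by rewrite h h2. Qed.
Lemma grec2 : b = ((gQ-1)/2%:R - (gZ-1)/2%:R) / ((gY-1)/2%:R).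
Proof. have := gYm; rewrite /gQ => h. field. by rewrite h h2. Qed.
Lemma grec3 : c = ((gR-1)/2%:R - (gX-1)/2%:R) / ((gZ-1)/2%:R).
Proof. have := gZm; rewrite /gR => h. field. by rewrite h h2. Qed.

End Gen.

Lemma msizeM' (n : nat) (p q : {mpoly rat[n]}) :
  (msize (p * q) <= (msize p + msize q).-1)%N.
Proof.
have [->|nzp] := eqVneq p 0; first by rewrite mul0r msize0.
have [->|nzq] := eqVneq q 0; first by rewrite mulr0 msize0.
by rewrite msizeM.
Qed.

Lemma msize_exp (n : nat) (p : {mpoly rat[n]}) k d :
  (msize p <= d.+1)%N -> (msize (p ^+ k) <= (k * d).+1)%N.
Proof.
move=> hp; elim: k => [|k IH]; first by rewrite expr0 msize1.
rewrite exprS; apply: leq_trans (msizeM' _ _) _.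
rewrite mulSn; lia.
Qed.

Lemma msize_prod (n : nat) (I : finType) (F : I -> {mpoly rat[n]}) (D : I -> nat) :
  (forall i, msize (F i) <= (D i).+1)%N -> (msize (\prod_i F i) <= (\sum_i D i).+1)%N.
Proof.
move=> h; apply: (big_ind2 (fun p k => msize p <= k.+1)%N) => //.
  by rewrite msize1.
move=> p1 k1 p2 k2 h1 h2; apply: leq_trans (msizeM' _ _) _; lia.
Qed.

Lemma card_ineq d e : e = ((4 * d + 1) ^ 3)%N ->
  ((4 * (e * d)).+1 ^ 3 < e.+1 ^ 4)%N.
Proof.
move=> he.
have h1 : ((4 * (e * d)).+1 <= (4 * d + 1) * e.+1)%N by nia.
apply: (@leq_ltn_trans (((4 * d + 1) * e.+1) ^ 3)%N).
  by rewrite leq_exp2r.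
rewrite expnMn -he [X in (_ < X)%N]expnS ltn_pmul2r //.
Qed.

Lemma qevalE (K : fieldType) (f : {rmorphism rat -> K}) n (P : {mpoly rat[n]}) s :
  qeval P s = mmap f s P.
Proof. by rewrite /qeval /mmap; apply: eq_bigr => m _; rewrite fmorph_eq_rat. Qed.

Local Open Scope quotient_scope.
Lemma frac_dec (R : idomainType) (x : {fraction R}) :
  exists a b : R, b != 0 /\ x = tofrac a / tofrac b.
Proof.
elim/quotW: x => r.
exists \n_r, \d_r; split; first exact: denom_ratioP.
apply: (canRL (mulfK _)); first by rewrite tofrac_eq0 denom_ratioP.
unlock tofrac. rewrite -[_ * _]/(FracField.mul _ _) -FracField.pi_mul. apply/eqmodP. rewrite /= FracField.equivfE.
rewrite /FracField.mulf /= !numden_Ratio ?oner_neq0 ?mulf_neq0 ?denom_ratioP ?oner_neq0 //.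
by rewrite mulr1 mulr1 mulrC.
Qed.
Lemma lin_dep (K : fieldType) (I J : finType) (F : I -> J -> K) : (#|J| < #|I|)%N ->
  exists c : I -> K, (exists i, c i != 0) /\ forall j, \sum_i c i * F i j = 0.
Proof.
move=> hIJ.
pose A : 'M[K]_(#|I|, #|J|) := \matrix_(i, j) F (enum_val i) (enum_val j).
have nzk : kermx A != 0.
  rewrite -mxrank_eq0 mxrank_ker subn_eq0 -ltnNge.
  exact: leq_ltn_trans (rank_leq_col A) hIJ.
have [i0 Hi0] : exists i0, row i0 (kermx A) != 0.
  case: (pickP (fun i => row i (kermx A) != 0)) => [i0 Hi0 | H]; first by exists i0.
  case/negP: nzk; apply/eqP/row_matrixP => i; rewrite row0; apply/eqP.
  by move: (H i) => /= /negbFE.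
set vv := row i0 (kermx A) in Hi0.
have vA : vv *m A = 0 by rewrite /vv -row_mul mulmx_ker row0.
exists (fun x => vv 0 (enum_rank x)); split.
  have [k Hk] : exists k, vv 0 k != 0.
    case: (pickP (fun k => vv 0 k != 0)) => [k Hk | H]; first by exists k.
    case/negP: Hi0; apply/eqP/matrixP => a b.
    rewrite [RHS]mxE (ord1 a); move: (H b) => /= /negbFE /eqP; done.
  by exists (enum_val k); rewrite enum_valK.
move=> j.
transitivity ((vv *m A) 0 (enum_rank j)); last by rewrite vA mxE.
rewrite mxE (reindex _ (onW_bij _ (enum_val_bij I))) /=.
apply: eq_bigr => k _; rewrite enum_valK mxE; congr (_ * _); rewrite /A mxE enum_rankK; done.
Qed.

Definition fC : {rmorphism rat -> QUVW} := (@tofrac _ \o (@mpolyC 3 rat))%FUN.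

Lemma dep4 (s : 'I_4 -> QUVW) : ~ alg_indep s.
Proof.
have [ab Hab] : exists ab : 'I_4 -> {mpoly rat[3]} * {mpoly rat[3]},
    forall k, (ab k).2 != 0 /\ s k = tofrac (ab k).1 / tofrac (ab k).2.
  have H : forall k : 'I_4, exists ab : {mpoly rat[3]} * {mpoly rat[3]},
      ab.2 != 0 /\ s k = tofrac ab.1 / tofrac ab.2.
    move=> k; have [a [b [hb ->]]] := frac_dec (s k).
    by exists (a, b).
  case: (fin_all_exists H) => ab Hab; by exists ab.
pose a k := (ab k).1; pose b k := (ab k).2.
pose d := (\max_(k < 4) maxn (msize (a k)) (msize (b k)))%N.
have ha k : (msize (a k) <= d.+1)%N.
  apply: leq_trans (leqnSn _); apply: leq_trans (leq_maxl _ (msize (b k))) _.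
  exact: (@bigop.leq_bigmax _ (fun k => maxn (msize (a k)) (msize (b k))) k).
have hb k : (msize (b k) <= d.+1)%N.
  apply: leq_trans (leqnSn _); apply: leq_trans (leq_maxr (msize (a k)) _) _.
  exact: (@bigop.leq_bigmax _ (fun k => maxn (msize (a k)) (msize (b k))) k).
pose e := ((4 * d + 1) ^ 3)%N.
pose N := (4 * (e * d))%N.
pose I := {ffun 'I_4 -> 'I_e.+1}.
pose J := {ffun 'I_3 -> 'I_N.+1}.
pose mono (i : I) : 'X_{1..4} := [multinom val (i k) | k < 4].
pose mj (j : J) : 'X_{1..3} := [multinom val (j k) | k < 3].
pose T (i : I) : {mpoly rat[3]} := \prod_(k < 4) (a k ^+ i k * b k ^+ (e - i k)).
have hT i : (msize (T i) <= N.+1)%N.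
  have -> : N = (\sum_(k < 4) (e * d))%N by rewrite sum_nat_const card_ord.
  apply: msize_prod => k.
  have -> : (e * d = i k * d + (e - i k) * d)%N.
    by rewrite -mulnDl subnKC // -ltnS.
  apply: leq_trans (msizeM' _ _) _.
  have := msize_exp (i k) (ha k); have := msize_exp (e - i k) (hb k); lia.
have card : (#|J| < #|I|)%N by rewrite !card_ffun !card_ord; exact: card_ineq.
have [c [[i0 hc0] hc]] := lin_dep (fun (i : I) (j : J) => (T i)@_(mj j)) card.
pose Pc : {mpoly rat[4]} := \sum_(i : I) c i *: 'X_[mono i].
have mono_inj : injective mono.
  move=> i i' h; apply/ffunP => k; apply: val_inj.
  by have := congr1 (fun m : 'X_{1..4} => m k) h; rewrite /mono /= !mnmE.
have Pnz : Pc != 0.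
  apply/negP => /eqP h; have := congr1 (mcoeff (mono i0)) h.
  rewrite mcoeff0 raddf_sum (bigD1 i0) //= big1 => [|i hi].
    by rewrite mcoeffZ mcoeffX eqxx mulr1 addr0; apply/eqP.
  by rewrite mcoeffZ mcoeffX (inj_eq mono_inj) (negbTE hi) mulr0.
have Tsum : \sum_(i : I) c i *: T i = 0.
  apply/mpolyP => m; rewrite mcoeff0 raddf_sum /=.
  under eq_bigr do rewrite mcoeffZ.
  case: (leqP (mdeg m) N) => hm.
    pose j : J := [ffun k => inord (m k)].
    have mjE : mj j = m.
      apply/mnmP => k; rewrite /mj mnmE ffunE /= inordK // ltnS.
      apply: leq_trans _ hm; rewrite mdegE (bigD1 k) //=; exact: leq_addr.
    by have := hc j; rewrite mjE.
  apply: big1 => i _; suff -> : (T i)@_m = 0 by rewrite mulr0.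
  apply/eqP; rewrite mcoeff_eq0; apply: msize_mdeg_ge; exact: leq_trans (hT i) hm.
have qe : qeval Pc s = 0.
  have hbnz k : tofrac (b k) != 0 by rewrite tofrac_eq0; exact: (Hab k).1.
  have hB : \prod_k (tofrac (b k))^+e != 0.
    by apply/prodf_neq0 => k _; rewrite expf_neq0.
  suff : qeval Pc s * \prod_k tofrac (b k) ^+ e = 0.
    by move/eqP; rewrite mulf_eq0 (negbTE hB) orbF => /eqP.
  rewrite (qevalE fC) raddf_sum mulr_suml.
  transitivity (tofrac (\sum_(i : I) c i *: T i)); last by rewrite Tsum rmorph0.
  rewrite rmorph_sum; apply: eq_bigr => i _.
  rewrite /= mmapZ mmapX -mul_mpolyC rmorphM -mulrA; congr (_ * _).
  rewrite /mmap1 /T rmorph_prod -big_split; apply: eq_bigr => k _ /=.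
  rewrite /mono mnmE (Hab k).2 -/(a k) -/(b k).
  rewrite rmorphM !rmorphXn expr_div_n.
  have -> : tofrac (b k) ^+ e = tofrac (b k) ^+ i k * tofrac (b k) ^+ (e - i k).
    by rewrite -exprD subnKC // -ltnS.
  have hBi := expf_neq0 (i k) (hbnz k).
  by rewrite mulrA (divfK hBi).
by move=> H; move: Pnz; rewrite (H _ qe) eqxx.
Qed.

Lemma qevalX (n : nat) (g : 'I_n -> QUVW) (i : 'I_n) : qeval ('X_i : {mpoly rat[n]}) g = g i.
Proof. by rewrite (qevalE fC) /= mmapX mmap1U. Qed.

Lemma qevalB (n : nat) (g : 'I_n -> QUVW) (P Q : {mpoly rat[n]}) :
  qeval (P - Q) g = qeval P g - qeval Q g.
Proof. by rewrite !(qevalE fC) /= mmapB. Qed.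

Lemma indet_indep : alg_indep indet.
Proof.
move=> P; rewrite (qevalE fC) => h.
suff : tofrac P = 0 by move/eqP; rewrite tofrac_eq0 => /eqP.
rewrite -h [in LHS](mpolyE P) /mmap rmorph_sum /=; apply: eq_bigr => m _.
rewrite -mul_mpolyC rmorphM /=; congr (_ * _).
by rewrite mpolyXE_id rmorph_prod /mmap1; apply: eq_bigr => i _; rewrite rmorphXn.
Qed.

Definition o6 (k : nat) (h : (k < 6)%N) : 'I_6 := Ordinal h.


Theorem theorem2 :
  exists x y z p q r : QUVW,
    [/\ tri x + tri y = tri p,
        tri y + tri z = tri q,
        tri z + tri x = tri r &
        trdeg_gen_eq (fun i : 'I_6 => nth 0 [:: x; y; z; p; q; r] i) 3].
Proof.
have H2 := two_nz; have Hu := u_nz; have Hv := v_nz; have Hw := w_nz.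
have HD := Dn_nz; have HX := Xm_nz; have HY := Ym_nz; have HZ := Zm_nz.
have Hi2 : (2%:R : QUVW)^-1 != 0 := invr_neq0 H2.
exists ((gX u v w - 1)/2%:R), ((gY u v w - 1)/2%:R), ((gZ u v w - 1)/2%:R),
  ((gP u v w - 1)/2%:R), ((gQ u v w - 1)/2%:R), ((gR u v w - 1)/2%:R).
split.
- exact: (@gtri1 _ u v w H2 Hu).
- exact: (@gtri2 _ u v w H2 Hv).
- exact: (@gtri3 _ u v w H2 Hu Hv Hw HD).
split; last by move=> s _; exact: dep4.
exists indet; split; last exact: indet_indep.
move=> i; case: i => [[|[|[|i]]] Hi]; last by exfalso; move: Hi; rewrite !ltnS ltn0.
- have -> : indet (Ordinal Hi) = u by rewrite /u /i0; congr indet; apply: val_inj.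
  exists ('X_(o6 (isT : (3 < 6)%N)) - 'X_(o6 (isT : (1 < 6)%N))), 'X_(o6 (isT : (0 < 6)%N)).
  rewrite qevalB !qevalX; split.
    apply: mulf_neq0; last exact: Hi2. exact: (@gXm _ u v w HD HX).
  exact: (@grec1 _ u v w H2 HD HX).
- have -> : indet (Ordinal Hi) = v by rewrite /v /i1; congr indet; apply: val_inj.
  exists ('X_(o6 (isT : (4 < 6)%N)) - 'X_(o6 (isT : (2 < 6)%N))), 'X_(o6 (isT : (1 < 6)%N)).
  rewrite qevalB !qevalX; split.
    apply: mulf_neq0; last exact: Hi2. exact: (@gYm _ u v w H2 Hu HD HY).
  exact: (@grec2 _ u v w H2 Hu HD HY).
- have -> : indet (Ordinal Hi) = w by rewrite /w /i2; congr indet; apply: val_inj.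
  exists ('X_(o6 (isT : (5 < 6)%N)) - 'X_(o6 (isT : (0 < 6)%N))), 'X_(o6 (isT : (2 < 6)%N)).
  rewrite qevalB !qevalX; split.
    apply: mulf_neq0; last exact: Hi2. exact: (@gZm _ u v w H2 Hu Hv HD HZ).
  exact: (@grec3 _ u v w H2 Hu Hv HD HZ).
Qed.
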